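(* (i) Let $p, m, r \in \mathbb N$. Then \begin{align*} S(p,m,1,r,0) &=\sum_{i=2}^{m}\frac{(-1)^{m-i}}{r^{m-i+1}}S_{p,i}^{+,+}+\frac{(-1)^{m-1}}{r^{m}}\zeta(p+1)\\ &\quad +\frac{(-1)^{m-1}}{r^{m}}\left(\sum_{j=1}^{r-1}\frac{(-1)^{p+1}H_j}{j^p} +\sum_{\ell=2}^{p}(-1)^{p-\ell}H_{r-1}^{(p-\ell+1)}\zeta(\ell)\right)\,. \end{align*} (ii) Let $m, r \in \mathbb N$, $p \in \mathbb N_{0}$ with $m \geq p+2$. Then \begin{align*} S(-p,m,1,r,0) =\frac{1}{p+1}\sum_{\ell=0}^{p} \binom{p+1}{\ell}B_{\ell}^{+} \left(\sum_{i=2}^{m-p-1+\ell}\frac{(-1)^{m-p-1+\ell-i}}{r^{m-p+\ell-i}}\zeta(i) +\frac{(-1)^{m-p-2+\ell}}{r^{m-p-1+\ell}} H_{r}\right)\,. \end{align*}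
   Context: $H_n^{(q)}=\sum_{j=1}^n j^{-q}$ for $q\in\mathbb N$, $H_n=H_n^{(1)}$, $H_0^{(q)}=0$; for an integer $q\ge0$, $H_n^{(-q)}=\sum_{\ell=1}^n\ell^q$. For $q\in\mathbb Z$ and $m,t,r\in\mathbb N$, $S(q,m,t,r,0):=\sum_{n=1}^\infty\frac{H_n^{(q)}}{n^{m}(n+r)^{t}}$. $S_{p,q}^{+,+}:=\sum_{n=1}^\infty H_n^{(p)}/n^q$. $\zeta$ is the Riemann zeta function. Bernoulli numbers $B_j^{+}$: $\frac{x}{1-e^{-x}}=\sum_{j\ge0}B_j^{+}\frac{x^j}{j!}$. Empty sums are $0$. *)

(* Defs.v *)
From Stdlib Require Import Reals Lra Lia ZArith Arith List.
From Coquelicot Require Import Coquelicot.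
Open Scope R_scope.

(* sum_{i=a}^{b} f i over naturals, empty (= 0) when b < a *)
Definition sumR (a b : nat) (f : nat -> R) : R :=
  fold_right Rplus 0 (map f (seq a (b + 1 - a))).

Definition H (q : Z) (n : nat) : R :=
  if (0 <? q)%Z then sumR 1 n (fun j => / (INR j ^ Z.to_nat q))
  else sumR 1 n (fun l => INR l ^ Z.to_nat (- q)).

(* k-th term (k >= 0, i.e. n = k+1) of S(q,m,t,r,0) *)
Definition S_term (q : Z) (m t r : nat) (k : nat) : R :=
  H q (S k) / (INR (S k) ^ m * INR (S k + r) ^ t).

Definition Spp (p : Z) (q : nat) : R :=
  Series (fun k => H p (S k) / INR (S k) ^ q).

Definition zeta (s : nat) : R := Series (fun k => / INR (S k) ^ s).

Definition bern_gf (x : R) : R :=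
  if Req_EM_T x 0 then 1 else x / (1 - exp (- x)).

(* B_j^+ : x/(1-e^{-x}) = sum_j B_j^+ x^j / j!, i.e. B_j^+ = j-th derivative at 0 *)
Definition Bplus (j : nat) : R := Derive_n bern_gf j 0.

(* Main.v *)
Require Import Defs.
From Stdlib Require Import Reals ZArith Arith List.
From Coquelicot Require Import Coquelicot.
From Stdlib Require Import Lra Lia Psatz.
Open Scope R_scope.
Fixpoint sN (f : nat -> R) (n : nat) : R :=
  match n with O => 0 | S k => sN f k + f k end.

Lemma sN_ext f g n : (forall k, (k < n)%nat -> f k = g k) -> sN f n = sN g n.
Proof. induction n; simpl; intros; auto. rewrite IHn by (intros; apply H; lia). rewrite H by lia. auto. Qed.

Lemma sN_plus f g n : sN (fun k => f k + g k) n = sN f n + sN g n.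
Proof. induction n; simpl; [lra|rewrite IHn; lra]. Qed.

Lemma sN_scal c f n : sN (fun k => c * f k) n = c * sN f n.
Proof. induction n; simpl; [lra|rewrite IHn; lra]. Qed.

Lemma sN_zero n : sN (fun _ => 0) n = 0.
Proof. induction n; simpl; [lra|rewrite IHn; lra]. Qed.

Lemma sN_shift f n : sN f (S n) = f O + sN (fun k => f (S k)) n.
Proof. induction n. simpl; lra. change (sN f (S (S n))) with (sN f (S n) + f (S n)). rewrite IHn. simpl. lra. Qed.

Lemma sN_rev f n : sN f n = sN (fun k => f (n - 1 - k)%nat) n.
Proof.
  induction n. reflexivity.
  change (sN f (S n)) with (sN f n + f n). rewrite (sN_shift (fun k => f (S n - 1 - k)%nat)).
  rewrite IHn. replace (S n - 1 - 0)%nat with n by lia.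
  rewrite Rplus_comm. f_equal. apply sN_ext. intros. f_equal. lia.
Qed.

Lemma sN_swap (f : nat -> nat -> R) n m :
  sN (fun i => sN (fun j => f i j) m) n = sN (fun j => sN (fun i => f i j) n) m.
Proof.
  induction n; simpl. rewrite sN_zero. auto.
  rewrite IHn. rewrite <- sN_plus. auto.
Qed.

Lemma sN_pad f k n : (k <= n)%nat -> sN f k = sN (fun b => if (b <? k)%nat then f b else 0) n.
Proof.
  induction n; intros. replace k with O by lia. auto.
  destruct (Nat.eq_dec k (S n)).
  - subst. simpl. destruct (Nat.ltb_spec n (S n)); [|lia]. f_equal. apply sN_ext. intros.
    destruct (Nat.ltb_spec k (S n)); [auto|lia].
  - simpl. rewrite IHn by lia. destruct (Nat.ltb_spec n k); [lia|lra].
Qed.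

Lemma tri_swap (f : nat -> nat -> R) N :
  sN (fun a => sN (fun b => f a b) (N - a)) N = sN (fun b => sN (fun a => f a b) (N - b)) N.
Proof.
  transitivity (sN (fun a => sN (fun b => if (a + b <? N)%nat then f a b else 0) N) N).
  - apply sN_ext; intros. rewrite (sN_pad _ (N-k) N) by lia. apply sN_ext; intros.
    destruct (Nat.ltb_spec k0 (N-k)), (Nat.ltb_spec (k+k0) N); auto; lia.
  - rewrite sN_swap. apply sN_ext; intros. rewrite (sN_pad _ (N-k) N) by lia. apply sN_ext; intros.
    destruct (Nat.ltb_spec k0 (N-k)), (Nat.ltb_spec (k0+k) N); auto; lia.
Qed.

Lemma sfR0_sN f n : sum_f_R0 f n = sN f (S n).
Proof. induction n; simpl; [lra|]. simpl in IHn. rewrite IHn. auto. Qed.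

Lemma sum_n_sN (f : nat -> R) n : sum_n f n = sN f (S n).
Proof. rewrite sum_n_Reals. apply sfR0_sN. Qed.

Lemma sumR_sN a b f : sumR a b f = sN (fun k => f (a + k)%nat) (b + 1 - a).
Proof.
  unfold sumR. generalize (b + 1 - a)%nat. intro n. revert a. induction n; intros. simpl; auto.
  cbn [seq map fold_right]. rewrite IHn. rewrite sN_shift. rewrite Nat.add_0_r. f_equal. apply sN_ext. intros. f_equal. lia.
Qed.

Lemma sumR_ext a b f g : (forall i, (a <= i <= b)%nat -> f i = g i) -> sumR a b f = sumR a b g.
Proof. intros. rewrite !sumR_sN. apply sN_ext. intros. apply H. lia. Qed.

Lemma is_series_sN_iff (a : nat -> R) l : is_series a l <-> is_lim_seq (fun N => sN a (S N)) l.
Proof.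
  split; intro H.
  - apply is_lim_seq_ext with (sum_n a). intros; apply sum_n_sN. exact H.
  - assert (is_lim_seq (sum_n a) l). apply is_lim_seq_ext with (fun N => sN a (S N)). intros; symmetry; apply sum_n_sN. exact H.
    exact H0.
Qed.

Lemma is_series_fin (u : nat -> nat -> R) (v : nat -> R) N :
  (forall l, (l < N)%nat -> is_series (u l) (v l)) ->
  is_series (fun n => sN (fun l => u l n) N) (sN v N).
Proof.
  induction N; intros; simpl.
  - apply is_series_sN_iff. apply is_lim_seq_ext with (fun _ => 0). intros; symmetry; apply sN_zero. apply is_lim_seq_const.
  - apply (is_series_plus (fun n => sN (fun l => u l n) N) (u N)). apply IHN. intros; apply H; lia. apply H; lia.
Qed.

Lemma is_series_scalR c (a : nat -> R) l : is_series a l -> is_series (fun n => c * a n) (c * l).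
Proof. intro. apply (is_series_scal c a l H). Qed.


Lemma normR (x : R) : norm x = Rabs x.
Proof. reflexivity. Qed.
Lemma INRS_pos n : 0 < INR (S n).
Proof. apply lt_0_INR; lia. Qed.
Lemma lim_invS : is_lim_seq (fun n => / INR (S n)) 0.
Proof.
  apply (is_lim_seq_incr_1 (fun n => / INR n)).
  replace (Finite 0) with (Rbar_inv p_infty) by reflexivity.
  apply is_lim_seq_inv. apply is_lim_seq_INR. discriminate.
Qed.

Lemma tele (c : nat -> R) (L : R) : is_lim_seq c L -> is_series (fun n => c n - c (S n)) (c O - L).
Proof.
  intro H. apply is_series_sN_iff.
  apply is_lim_seq_ext with (fun N => c O - c (S N)).
  - intro N. induction N. simpl. lra. change (sN (fun n => c n - c (S n)) (S (S N))) with
      (sN (fun n => c n - c (S n)) (S N) + (c (S N) - c (S (S N)))). rewrite <- IHN. lra.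
  - apply is_lim_seq_minus'. apply is_lim_seq_const. apply (is_lim_seq_incr_1 c). exact H.
Qed.

Lemma sq_lim (u : nat -> R) K : (forall n, 0 <= u n) -> (forall n, u n ^ 2 <= K * / INR (S n)) ->
  is_lim_seq u 0.
Proof.
  intros H0 H1. apply is_lim_seq_Reals. intros eps Heps.
  assert (HK : is_lim_seq (fun n => K * / INR (S n)) 0).
  { replace (Finite 0) with (Rbar_mult K 0) by (simpl; f_equal; ring). apply is_lim_seq_scal_l. apply lim_invS. }
  apply is_lim_seq_Reals in HK. destruct (HK (eps*eps)) as [N HN]. nra.
  exists N. intros n Hn. specialize (HN n Hn). unfold R_dist in *. rewrite Rminus_0_r in *.
  specialize (H0 n). specialize (H1 n). rewrite (Rabs_pos_eq (u n)) by auto.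
  assert (u n ^ 2 < eps*eps) by (pose proof (Rle_abs (K * / INR (S n))); lra). nra.
Qed.

Lemma zeta_bound j n : (2 <= j)%nat -> 0 <= / INR (S n) ^ j <= 2 * (/ INR (S n) - / INR (S (S n))).
Proof.
  intros Hj. pose proof (INRS_pos n). rewrite S_INR. rewrite S_INR in H.
  set (x := INR n + 1) in *. split. apply Rlt_le, Rinv_0_lt_compat, pow_lt; lra.
  apply Rle_trans with (/ x ^ 2).
  - apply Rinv_le_contravar. apply pow_lt; lra. replace j with (2 + (j-2))%nat by lia.
    rewrite pow_add. assert (1 <= x ^ (j-2)). apply pow_R1_Rle. unfold x. pose proof (pos_INR n). lra.
    pose proof (pow_lt x 2). nra.
  - 
    assert (1 <= x) by (unfold x; pose proof (pos_INR n); lra).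
    replace (INR (S (S n))) with (x+1) by (unfold x; rewrite (S_INR (S n)), S_INR; ring).
    replace (2 * (/ x - / (x + 1))) with (/ (x*(x+1)/2)) by (field; lra). apply Rinv_le_contravar. nra. nra.
Qed.

Lemma ex_tele_bound : ex_series (fun n => 2 * (/ INR (S n) - / INR (S (S n)))).
Proof.
  eexists. apply is_series_scalR. apply (tele (fun n => / INR (S n))). apply lim_invS.
Qed.

Lemma zeta_series j : (2 <= j)%nat -> is_series (fun n => / INR (S n) ^ j) (zeta j).
Proof.
  intro Hj. unfold zeta. apply Series_correct.
  apply (ex_series_le (K:=R_AbsRing) (V:=R_CompleteNormedModule)) with (2 := ex_tele_bound). intro n. rewrite normR.
  destruct (zeta_bound j n Hj). rewrite Rabs_pos_eq; auto.
Qed.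

Definition Vf (f : nat -> R) (X r : R) (m : nat) :=
  sumR 2 m (fun i => (-1)^(m-i) / r^(m-i+1) * f i) + (-1)^(m-1) / r^m * X.

Lemma Vf_S f X r m : r <> 0 -> (1 <= m)%nat -> Vf f X r (S m) = / r * (f (S m) - Vf f X r m).
Proof.
  intros Hr Hm. destruct m as [|m']; [lia|]. unfold Vf. rewrite !sumR_sN.
  replace (S (S m') + 1 - 2)%nat with (S m') by lia. replace (S m' + 1 - 2)%nat with m' by lia.
  change (sN ?g (S m')) with (sN g m' + g m').
  assert (E : sN (fun k => (-1) ^ (S (S m') - (2 + k)) / r ^ (S (S m') - (2 + k) + 1) * f (2 + k)%nat) m'
     = - / r * sN (fun k => (-1) ^ (S m' - (2 + k)) / r ^ (S m' - (2 + k) + 1) * f (2 + k)%nat) m').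
  { rewrite <- sN_scal. apply sN_ext. intros k Hk.
    replace (S (S m') - (2 + k))%nat with (S (S m' - (2 + k))) by lia.
    set (e := (S m' - (2 + k))%nat). simpl pow. replace (S e + 1)%nat with (S (e + 1)) by lia. simpl pow.
    assert (r ^ (e+1) <> 0) by (apply pow_nonzero; auto). field. auto. }
  rewrite E. replace (2 + m')%nat with (S (S m')) by lia. replace (S (S m') - S (S m'))%nat with O by lia.
  replace (S (S m') - 1)%nat with (S m') by lia. replace (S m' - 1)%nat with m' by lia.
  simpl pow. assert (r ^ m' <> 0) by (apply pow_nonzero; auto). field. auto.
Qed.

Lemma rec_series (u w : nat -> nat -> R) f X r : r <> 0 -> is_series (u 1%nat) (X / r) ->
  (forall m n, (1 <= m)%nat -> u (S m) n = / r * (w (S m) n - u m n)) ->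
  (forall m, (2 <= m)%nat -> is_series (w m) (f m)) ->
  forall m, (1 <= m)%nat -> is_series (u m) (Vf f X r m).
Proof.
  intros Hr H1 Hrec Hw m Hm. induction m. lia.
  destruct (Nat.eq_dec m 0).
  - subst. replace (Vf f X r 1) with (X / r). auto. unfold Vf. rewrite sumR_sN. simpl. field. auto.
  - rewrite Vf_S by (auto; lia). apply is_series_ext with (fun n => / r * (w (S m) n - u m n)).
    intros; rewrite Hrec; auto; lia.
    apply is_series_scalR. apply (is_series_minus (w (S m)) (u m)). apply Hw; lia. apply IHm; lia.
Qed.

Definition Tterm (k r n : nat) : R := / (INR (S n) ^ k * INR (S n + r)).
Definition cfun (r n : nat) : R := sN (fun j => / INR (S n + j)) r.
Definition hp (p n : nat) : R := sN (fun k => / INR (S k) ^ p) n.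

Lemma cfun0 r : cfun r 0 = hp 1 r.
Proof. unfold cfun, hp. apply sN_ext; intros. rewrite pow_1. f_equal. Qed.

Lemma cfun_diff r n : cfun r n - cfun r (S n) = / INR (S n) - / INR (S n + r).
Proof.
  unfold cfun. pose proof (sN_shift (fun j => / INR (S n + j)) r).
  change (sN ?f (S r)) with (sN f r + f r) in H. cbv beta in H.
  replace (sN (fun j => / INR (S (S n) + j)) r) with (sN (fun k => / INR (S n + S k)) r).
  replace (S n + 0)%nat with (S n) in H by lia. lra. apply sN_ext; intros. f_equal. f_equal. lia.
Qed.

Lemma cfun_bound r n : 0 <= cfun r n <= INR r * / INR (S n).
Proof.
  unfold cfun. induction r. simpl. pose proof (INRS_pos n). nra. change (sN ?f (S r)) with (sN f r + f r). cbv beta. rewrite (S_INR r), Rmult_plus_distr_r, Rmult_1_l.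
  assert (0 < / INR (S n + r) <= / INR (S n)).
  { split. apply Rinv_0_lt_compat, lt_0_INR; lia. apply Rinv_le_contravar. apply INRS_pos. apply le_INR; lia. }
  lra.
Qed.

Lemma cfun_lim r : is_lim_seq (cfun r) 0.
Proof.
  apply is_lim_seq_le_le with (fun _ => 0) (fun n => INR r * / INR (S n)).
  intros; apply cfun_bound. apply is_lim_seq_const.
  replace (Finite 0) with (Rbar_mult (INR r) 0) by (simpl; f_equal; ring). apply is_lim_seq_scal_l. apply lim_invS.
Qed.

Ltac toR := match goal with |- ?a = ?b => change (@eq R a b) end.

Lemma INR_pos_ne r : (1 <= r)%nat -> INR r <> 0.
Proof. intros. apply not_0_INR. lia. Qed.

Lemma T1 r : (1 <= r)%nat -> is_series (Tterm 1 r) (hp 1 r / INR r).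
Proof.
  intros Hr. apply is_series_ext with (fun n => / INR r * (cfun r n - cfun r (S n))).
  - intros n. rewrite cfun_diff. unfold Tterm. rewrite plus_INR. pose proof (INRS_pos n).
    pose proof (INR_pos_ne r Hr). pose proof (pos_INR r). toR. field; repeat split; lra.
  - replace (hp 1 r / INR r) with (/ INR r * (cfun r 0 - 0)) by (rewrite cfun0; field; apply INR_pos_ne; auto).
    apply is_series_scalR. apply tele. apply cfun_lim.
Qed.

Lemma Tser r : (1 <= r)%nat -> forall k, (1 <= k)%nat -> is_series (Tterm k r) (Vf zeta (hp 1 r) (INR r) k).
Proof.
  intros Hr. apply rec_series with (w := fun m n => / INR (S n) ^ m).
  - apply INR_pos_ne; auto.
  - apply T1; auto.
  - intros m n _. unfold Tterm. rewrite plus_INR. pose proof (INRS_pos n).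
    pose proof (INR_pos_ne r Hr). pose proof (pos_INR r). rewrite <- tech_pow_Rmult.
    assert (INR (S n) ^ m <> 0) by (apply pow_nonzero; lra). toR. field; repeat split; lra.
  - intros. apply zeta_series; auto.
Qed.

Lemma H_pos p n : (1 <= p)%nat -> H (Z.of_nat p) n = hp p n.
Proof.
  intros Hp. unfold H. replace (0 <? Z.of_nat p)%Z with true by (symmetry; apply Z.ltb_lt; lia).
  rewrite Nat2Z.id, sumR_sN. replace (n + 1 - 1)%nat with n by lia. reflexivity.
Qed.

Lemma hp_bounds p N : (1 <= p)%nat -> 0 <= hp p N <= INR N /\ hp p N ^ 2 <= 3 * INR N.
Proof.
  intros Hp. induction N. unfold hp; simpl; lra.
  unfold hp in *. change (sN ?f (S N)) with (sN f N + f N). cbv beta.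
  set (h := sN (fun k => / INR (S k) ^ p) N) in *.
  assert (0 < / INR (S N) ^ p <= / INR (S N)).
  { pose proof (INRS_pos N). split. apply Rinv_0_lt_compat, pow_lt; lra.
    apply Rinv_le_contravar. lra. replace p with (1 + (p-1))%nat by lia. rewrite pow_add, pow_1.
    assert (1 <= INR (S N) ^ (p-1)). apply pow_R1_Rle. rewrite S_INR; pose proof (pos_INR N); lra. nra. }
  set (x := / INR (S N) ^ p) in *.
  assert (INR N * / INR (S N) <= 1).
  { pose proof (INRS_pos N). apply Rmult_le_reg_r with (INR (S N)); auto. rewrite Rmult_assoc, Rinv_l by lra.
    rewrite S_INR. lra. }
  assert (/ INR (S N) <= 1). { replace 1 with (/1) by lra. apply Rinv_le_contravar. lra. rewrite S_INR; pose proof (pos_INR N); lra. }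
  destruct IHN as [[A B] C].
  assert (h * x <= 1). { apply Rle_trans with (INR N * / INR (S N)); auto. apply Rmult_le_compat; lra. }
  pose proof (S_INR N) as HS. repeat split; try lra. nra.
Qed.

Lemma abel_id p r N :
  sN (fun k => hp p (S k) * (cfun r k - cfun r (S k))) N =
  sN (fun j => / INR (S j) ^ p * cfun r j) N - hp p N * cfun r N.
Proof.
  induction N. simpl. unfold hp. simpl. ring.
  change (sN ?f (S N)) with (sN f N + f N). cbv beta. rewrite IHN.
  unfold hp. change (sN ?f (S N)) with (sN f N + f N). cbv beta. ring.
Qed.

Lemma hc_lim p r : (1 <= p)%nat -> is_lim_seq (fun N => hp p N * cfun r N) 0.
Proof.
  intros Hp. apply sq_lim with (K := 3 * INR r ^ 2).
  - intros. destruct (hp_bounds p n Hp) as [[A _] _]. destruct (cfun_bound r n). nra.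
  - intros n. destruct (hp_bounds p n Hp) as [[A B] C]. destruct (cfun_bound r n) as [D E].
    pose proof (INRS_pos n). pose proof (pos_INR r).
    set (y := / INR (S n)) in *.
    assert (INR n * y <= 1).
    { unfold y. apply Rmult_le_reg_r with (INR (S n)); auto. rewrite Rmult_assoc, Rinv_l by lra.
      rewrite S_INR. lra. }
    assert (0 < y) by (apply Rinv_0_lt_compat; auto).
    assert ((hp p n * cfun r n)^2 <= 3 * INR n * (INR r * y)^2).
    { replace ((hp p n * cfun r n)^2) with (hp p n ^2 * cfun r n ^2) by ring.
      apply Rmult_le_compat; try nra. }
    assert (3 * INR n * (INR r * y)^2 = 3 * INR r ^2 * y * (INR n * y)) by ring.
    assert (0 <= 3 * INR r ^2 * y) by nra.
    nra.
Qed.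

Definition Xval p r := zeta (p + 1) + sN (fun i => Vf zeta (hp 1 (S i)) (INR (S i)) p) (r - 1).

Lemma g_series p r : (1 <= p)%nat -> (1 <= r)%nat ->
  is_series (fun j => / INR (S j) ^ p * cfun r j) (Xval p r).
Proof.
  intros Hp Hr. unfold Xval.
  apply is_series_ext with (fun j => / INR (S j) ^ (p+1) + sN (fun i => Tterm p (S i) j) (r - 1)).
  - intros j. unfold cfun. destruct r as [|r']. lia. rewrite sN_shift. replace (S r' - 1)%nat with r' by lia.
    rewrite Rmult_plus_distr_l, <- sN_scal. f_equal.
    + rewrite Nat.add_0_r, pow_add, pow_1. pose proof (INRS_pos j). toR. field. split. lra. apply pow_nonzero; lra.
    + apply sN_ext; intros. unfold Tterm. pose proof (INRS_pos j). rewrite Rinv_mult. reflexivity.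
  - apply (is_series_plus (fun j => / INR (S j) ^ (p+1)) (fun j => sN (fun i => Tterm p (S i) j) (r - 1))).
    apply zeta_series; lia.
    apply is_series_fin. intros. apply Tser. lia. auto.
Qed.

Lemma A1 p r : (1 <= p)%nat -> (1 <= r)%nat ->
  is_series (S_term (Z.of_nat p) 1 1 r) (Xval p r / INR r).
Proof.
  intros Hp Hr.
  apply is_series_ext with (fun n => / INR r * (hp p (S n) * (cfun r n - cfun r (S n)))).
  - intros n. unfold S_term. rewrite H_pos by auto. rewrite cfun_diff. rewrite plus_INR.
    pose proof (INRS_pos n). pose proof (INR_pos_ne r Hr). pose proof (pos_INR r). toR. rewrite !pow_1. field; repeat split; lra.
  - replace (Xval p r / INR r) with (/ INR r * (Xval p r - 0)) by (field; apply INR_pos_ne; auto).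
    apply is_series_scalR. apply is_series_sN_iff.
    apply is_lim_seq_ext with (fun N => sN (fun j => / INR (S j) ^ p * cfun r j) (S N) - hp p (S N) * cfun r (S N)).
    intros; symmetry; apply abel_id.
    apply is_lim_seq_minus'. apply is_series_sN_iff. apply g_series; auto.
    apply (is_lim_seq_incr_1 (fun N => hp p N * cfun r N)). apply hc_lim; auto.
Qed.

Lemma Spp_series p m : (1 <= p)%nat -> (2 <= m)%nat ->
  is_series (fun k => H (Z.of_nat p) (S k) / INR (S k) ^ m) (Spp (Z.of_nat p) m).
Proof.
  intros Hp Hm. unfold Spp. apply Series_correct.
  apply (ex_series_le (K:=R_AbsRing) (V:=R_CompleteNormedModule)) with (b := fun k => 2 * S_term (Z.of_nat p) 1 1 1 k).
  - intros k. rewrite normR. unfold S_term. rewrite H_pos by auto.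
    destruct (hp_bounds p (S k) Hp) as [[A _] _]. pose proof (INRS_pos k).
    rewrite !pow_1. rewrite plus_INR. simpl (INR 1).
    set (x := INR (S k)) in *. assert (1 <= x) by (unfold x; rewrite S_INR; pose proof (pos_INR k); lra).
    assert (0 < x ^ m) by (apply pow_lt; lra).
    rewrite Rabs_pos_eq by (apply Rmult_le_pos; [auto| apply Rlt_le, Rinv_0_lt_compat; auto]).
    unfold Rdiv. rewrite <- Rmult_assoc, (Rmult_comm 2), Rmult_assoc. apply Rmult_le_compat_l; auto.
    replace (2 * / (x * (x + 1))) with (/ (x * (x+1) / 2)) by (field; lra).
    apply Rinv_le_contravar. nra. replace m with (2 + (m-2))%nat by lia. rewrite pow_add.
    assert (1 <= x ^ (m-2)) by (apply pow_R1_Rle; lra). simpl pow. nra.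
  - eexists. apply is_series_scalR. apply A1; auto.
Qed.

Lemma partA p m r : (1 <= p)%nat -> (1 <= m)%nat -> (1 <= r)%nat ->
  is_series (S_term (Z.of_nat p) m 1 r) (Vf (Spp (Z.of_nat p)) (Xval p r) (INR r) m).
Proof.
  intros Hp Hm Hr.
  apply (rec_series (fun m => S_term (Z.of_nat p) m 1 r) (fun m k => H (Z.of_nat p) (S k) / INR (S k) ^ m)).
  - apply INR_pos_ne; auto.
  - apply A1; auto.
  - intros m' n _. unfold S_term. rewrite !pow_1, plus_INR. pose proof (INRS_pos n).
    pose proof (INR_pos_ne r Hr). pose proof (pos_INR r). rewrite <- tech_pow_Rmult.
    assert (INR (S n) ^ m' <> 0) by (apply pow_nonzero; lra). toR. field; repeat split; lra.
  - intros; apply Spp_series; auto.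
  - auto.
Qed.

Lemma Xval_eq p r : (1 <= p)%nat -> (1 <= r)%nat ->
  Xval p r = zeta (p + 1) +
           (sumR 1 (r - 1) (fun j => (-1) ^ (p + 1) * H 1 j / INR j ^ p)
            + sumR 2 p (fun l => (-1) ^ (p - l) * H (Z.of_nat (p - l + 1)) (r - 1) * zeta l)).
Proof.
  intros Hp Hr. unfold Xval. f_equal. unfold Vf. rewrite sN_plus. rewrite Rplus_comm. f_equal.
  - rewrite sumR_sN. replace (r - 1 + 1 - 1)%nat with (r - 1)%nat by lia. apply sN_ext. intros k _.
    replace (1 + k)%nat with (S k) by lia. rewrite (H_pos 1 (S k) ltac:(lia) : H 1 (S k) = hp 1 (S k)).
    replace (p + 1)%nat with (p - 1 + 2)%nat by lia. rewrite pow_add. simpl ((-1)^2).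
    unfold Rdiv. ring.
  - rewrite (sN_ext _ (fun i => sN (fun k => (-1) ^ (p - (2 + k)) / INR (S i) ^ (p - (2 + k) + 1) * zeta (2 + k)%nat) (p + 1 - 2)) (r - 1)).
    rewrite sN_swap. rewrite sumR_sN. apply sN_ext. intros k Hk.
    rewrite H_pos by lia. unfold hp. rewrite <- sN_scal. rewrite Rmult_comm, <- sN_scal. apply sN_ext; intros.
    unfold Rdiv. ring.
    intros; rewrite sumR_sN; reflexivity.
Qed.

Lemma part1 : forall p m r : nat, (1 <= p)%nat -> (1 <= m)%nat -> (1 <= r)%nat ->
    is_series (S_term (Z.of_nat p) m 1 r)
      (sumR 2 m (fun i => (-1) ^ (m - i) / INR r ^ (m - i + 1) * Spp (Z.of_nat p) i)
       + (-1) ^ (m - 1) / INR r ^ m * zeta (p + 1)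
       + (-1) ^ (m - 1) / INR r ^ m *
           (sumR 1 (r - 1) (fun j => (-1) ^ (p + 1) * H 1 j / INR j ^ p)
            + sumR 2 p (fun l => (-1) ^ (p - l) * H (Z.of_nat (p - l + 1)) (r - 1) * zeta l))).
Proof.
  intros p m r Hp Hm Hr. eapply is_series_ext. intros; reflexivity.
  replace (sumR 2 m (fun i => (-1) ^ (m - i) / INR r ^ (m - i + 1) * Spp (Z.of_nat p) i)
       + (-1) ^ (m - 1) / INR r ^ m * zeta (p + 1)
       + (-1) ^ (m - 1) / INR r ^ m *
           (sumR 1 (r - 1) (fun j => (-1) ^ (p + 1) * H 1 j / INR j ^ p)
            + sumR 2 p (fun l => (-1) ^ (p - l) * H (Z.of_nat (p - l + 1)) (r - 1) * zeta l)))
    with (Vf (Spp (Z.of_nat p)) (Xval p r) (INR r) m).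
  apply partA; auto.
  unfold Vf. rewrite Xval_eq by auto. ring.
Qed.

Definition ag (k : nat) : R := (-1) ^ k / INR (fact (S k)).

Fixpoint bvec (n : nat) : nat -> R :=
  match n with
  | O => fun _ => 1
  | S n' => fun j => if Nat.leb j n' then bvec n' j
                     else - sN (fun k => ag (S k) * bvec n' (n' - k)) (S n')
  end.
Definition beta (n : nat) : R := bvec n n.

Lemma bvec_le n j : (j <= n)%nat -> bvec n j = beta j.
Proof.
  induction n; intros. replace j with O by lia. reflexivity.
  destruct (Nat.eq_dec j (S n)). subst. reflexivity.
  simpl. destruct (Nat.leb_spec j n); [|lia]. apply IHn; lia.
Qed.

Lemma beta_rec n : beta (S n) = - sN (fun k => ag (S k) * beta (n - k)) (S n).
Proof.
  unfold beta at 1.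
  change (bvec (S n) (S n)) with (if Nat.leb (S n) n then bvec n (S n) else - sN (fun k => ag (S k) * bvec n (n - k)) (S n)).
  rewrite (proj2 (Nat.leb_gt (S n) n)) by lia.
  f_equal. apply sN_ext. intros. rewrite bvec_le by lia. reflexivity.
Qed.

Lemma beta0 : beta 0 = 1.
Proof. reflexivity. Qed.

Lemma ag0 : ag 0 = 1.
Proof. unfold ag. simpl. field. Qed.

Lemma conv n : sN (fun k => ag k * beta (n - k)) (S n) = if Nat.eqb n 0 then 1 else 0.
Proof.
  destruct n. simpl. rewrite ag0, beta0. lra.
  rewrite sN_shift. simpl Nat.eqb. rewrite ag0. replace (S n - 0)%nat with (S n) by lia. rewrite beta_rec. 
  replace (sN (fun k => ag (S k) * beta (S n - S k)) (S n)) with (sN (fun k => ag (S k) * beta (n - k)) (S n)).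
  lra. apply sN_ext; intros. reflexivity.
Qed.

Lemma sN_abs f n : Rabs (sN f n) <= sN (fun k => Rabs (f k)) n.
Proof. induction n; simpl. rewrite Rabs_R0; lra. eapply Rle_trans. apply Rabs_triang. lra. Qed.

Lemma sN_le f g n : (forall k, (k < n)%nat -> f k <= g k) -> sN f n <= sN g n.
Proof. induction n; simpl; intros Hfg. lra. pose proof (Hfg n ltac:(lia)). pose proof (IHn ltac:(intros; apply Hfg; lia)). lra. Qed.

Lemma geom_sum n : sN (fun k => / 2 ^ (S k)) n = 1 - / 2 ^ n.
Proof.
  induction n. simpl. lra. change (sN ?f (S n)) with (sN f n + f n). rewrite IHn.
  simpl pow. assert (0 < 2 ^ n) by (apply pow_lt; lra). field. lra.
Qed.

Lemma fact_bound k : 2 ^ (S k) <= INR (fact (S (S k))).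
Proof.
  induction k. simpl. lra.
  change (fact (S (S (S k)))) with (S (S (S k)) * fact (S (S k)))%nat. rewrite mult_INR.
  change (2 ^ S (S k)) with (2 * 2 ^ (S k)).
  assert (2 <= INR (S (S (S k)))) by (rewrite !S_INR; pose proof (pos_INR k); lra).
  assert (0 <= 2 ^ S k) by (apply pow_le; lra). nra.
Qed.

Lemma ag_bound k : Rabs (ag (S k)) <= / 2 ^ (S k).
Proof.
  unfold ag. unfold Rdiv. rewrite Rabs_mult, pow_1_abs, Rmult_1_l.
  rewrite Rabs_inv, Rabs_pos_eq by apply pos_INR. apply Rinv_le_contravar. apply pow_lt; lra. apply fact_bound.
Qed.

Lemma ag_bound1 k : Rabs (ag k) <= 1.
Proof.
  unfold ag. unfold Rdiv. rewrite Rabs_mult, pow_1_abs, Rmult_1_l.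
  rewrite Rabs_inv, Rabs_pos_eq by apply pos_INR. replace 1 with (/1) by lra. apply Rinv_le_contravar. lra.
  pose proof (lt_O_fact (S k)). apply (le_INR 1). lia.
Qed.

Lemma beta_bound n : Rabs (beta n) <= 1.
Proof.
  induction n as [n IH] using (well_founded_induction lt_wf).
  destruct n. rewrite beta0, Rabs_R1. lra.
  rewrite beta_rec, Rabs_Ropp. eapply Rle_trans. apply sN_abs.
  eapply Rle_trans. apply sN_le with (g := fun k => / 2 ^ (S k)).
  intros. rewrite Rabs_mult. pose proof (ag_bound k). pose proof (IH (n - k)%nat ltac:(lia)).
  pose proof (Rabs_pos (ag (S k))). pose proof (Rabs_pos (beta (n-k))). nra.
  rewrite geom_sum. assert (0 < / 2 ^ S n) by (apply Rinv_0_lt_compat, pow_lt; lra). lra.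
Qed.

Lemma is_pseries_R a x l : is_pseries a x l <-> is_series (fun k => x ^ k * a k) l.
Proof. split; apply is_series_ext; intros; rewrite ?pow_n_pow; reflexivity. Qed.

Lemma rad_bound a : (forall n, Rabs (a n) <= 1) -> forall x, Rabs x < 1 -> Rbar_lt (Rabs x) (CV_radius a).
Proof.
  intros Ha x Hx. set (y := (Rabs x + 1) / 2). pose proof (Rabs_pos x).
  assert (Hd : CV_disk a y).
  { unfold CV_disk. apply (ex_series_le (K:=R_AbsRing) (V:=R_CompleteNormedModule)) with (b := fun n => y ^ n).
    intros n. rewrite normR, Rabs_Rabsolu, Rabs_mult. rewrite <- RPow_abs. rewrite (Rabs_pos_eq y) by (unfold y; lra).
    pose proof (Rabs_pos (a n)). assert (0 <= y ^ n) by (apply pow_le; unfold y; lra). specialize (Ha n). nra.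
    apply ex_series_geom. rewrite Rabs_pos_eq; unfold y; lra. }
  assert (Rbar_le (Rabs y) (CV_radius a)).
  { destruct (Rbar_le_lt_dec (Rabs y) (CV_radius a)); auto. exfalso. apply (CV_disk_outside a y r).
    apply ex_series_lim_0. apply ex_series_Rabs. exact Hd. }
  eapply Rbar_lt_le_trans; [|exact H0]. simpl. rewrite (Rabs_pos_eq y) by (unfold y; lra). unfold y; lra.
Qed.

Lemma ag_series x : x <> 0 -> is_series (fun k => x ^ k * ag k) ((1 - exp (- x)) / x).
Proof.
  intros Hx. pose proof (is_exp_Reals (- x)) as He. apply (proj1 (is_pseries_R _ _ _)) in He.
  assert (He2 : is_series (fun k => (-x)^(S k) * / INR (fact (S k))) (exp (-x) - 1)).
  { apply (is_series_incr_1 (fun k => (- x) ^ k * / INR (fact k))).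
    match goal with |- is_series _ ?l => replace l with (exp (-x)) end. exact He.
    change (exp (-x) = exp (-x) - 1 + (- x) ^ 0 * / INR (fact 0)).
    simpl. field. }
  clear He. rename He2 into He.
  apply (is_series_scalR (- / x)) in He. eapply is_series_ext; [|replace ((1 - exp (- x)) / x) with (- / x * (exp (- x) - 1)) by (field; auto); exact He].
  intros n. cbv beta. unfold ag. replace (- x) with (-1 * x) by ring. rewrite !Rpow_mult_distr.
  rewrite <- !tech_pow_Rmult. toR. field. split; [apply INR_fact_neq_0|auto].
Qed.

Lemma PSm_delta k : PS_mult ag beta k = if Nat.eqb k 0 then 1 else 0.
Proof. unfold PS_mult. rewrite sfR0_sN. apply conv. Qed.

Lemma mult_delta x : is_series (fun k => x ^ k * PS_mult ag beta k) 1.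
Proof.
  apply is_series_sN_iff. apply is_lim_seq_ext with (fun _ => 1). 2: apply is_lim_seq_const.
  intros N. induction N. simpl. rewrite PSm_delta. simpl. toR. ring.
  change (sN ?f (S (S N))) with (sN f (S N) + f (S N)). rewrite <- IHN. rewrite PSm_delta. simpl Nat.eqb. change (if false then 1 else 0) with 0. ring.
Qed.

Lemma rad_ag x : Rabs x < 1 -> Rbar_lt (Rabs x) (CV_radius ag).
Proof. apply rad_bound. apply ag_bound1. Qed.
Lemma rad_beta x : Rabs x < 1 -> Rbar_lt (Rabs x) (CV_radius beta).
Proof. apply rad_bound. apply beta_bound. Qed.

Lemma bern_eq x : Rabs x < 1 -> bern_gf x = PSeries beta x.
Proof.
  intros Hx. unfold bern_gf. destruct (Req_EM_T x 0).
  - subst. rewrite PSeries_0. reflexivity.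
  - pose proof (PSeries_correct beta x (CV_radius_inside beta x (rad_beta x Hx))) as Hb.
    pose proof (ag_series x n) as Ha. apply (proj2 (is_pseries_R _ _ _)) in Ha.
    pose proof (is_pseries_mult ag beta x _ _ Ha Hb (rad_ag x Hx) (rad_beta x Hx)) as Hm.
    apply (proj1 (is_pseries_R _ _ _)) in Hm.
    pose proof (is_series_unique _ _ Hm) as E1. rewrite (is_series_unique _ _ (mult_delta x)) in E1.
    assert (1 - exp (- x) <> 0). { intro Z. rewrite Z in E1. unfold Rdiv in E1. rewrite Rmult_0_l, Rmult_0_l in E1. lra. }
    apply Rmult_eq_reg_l with ((1 - exp (-x)) / x). rewrite <- E1. field. auto. auto.
    intro Z. unfold Rdiv in Z. apply Rmult_integral in Z. destruct Z; auto. apply Rinv_neq_0_compat in n. auto.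
Qed.

Lemma Bplus_eq n : Bplus n = INR (fact n) * beta n.
Proof.
  unfold Bplus. rewrite (Derive_n_ext_loc bern_gf (PSeries beta)).
  - rewrite Derive_n_PSeries. rewrite PSeries_0. unfold PS_derive_n. simpl (fact 0). simpl (0 + n)%nat.
    simpl INR. field. apply rad_beta. rewrite Rabs_R0. lra.
  - exists (mkposreal 1 Rlt_0_1). intros y Hy. apply bern_eq.
    change (Rabs (y - 0) < 1) in Hy. rewrite Rminus_0_r in Hy. exact Hy.
Qed.

Lemma Bplus0 : Bplus 0 = 1.
Proof. rewrite Bplus_eq, beta0. simpl. ring. Qed.

Lemma Cnn q : Binomial.C q q = 1.
Proof. unfold Binomial.C. rewrite Nat.sub_diag. simpl (fact 0). simpl (INR 1). field. apply INR_fact_neq_0. Qed.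

Definition Rb (Q : nat) := sN (fun l => Binomial.C Q l * Bplus l * (-1) ^ (Q - l)) Q.

Lemma Rb_ge2 Q : (2 <= Q)%nat -> Rb Q = 0.
Proof.
  intros HQ. destruct Q as [|n]; [lia|]. unfold Rb.
  assert (Hc : sN (fun k => ag (n - k) * beta k) (S n) = 0).
  { pose proof (conv n) as E. destruct (Nat.eqb_spec n 0); [lia|]. rewrite sN_rev in E. rewrite <- E.
    apply sN_ext. intros k Hk. f_equal; f_equal; lia. }
  transitivity (- INR (fact (S n)) * sN (fun k => ag (n - k) * beta k) (S n)).
  2: rewrite Hc; ring.
  rewrite <- sN_scal. apply sN_ext. intros l Hl. rewrite Bplus_eq. unfold Binomial.C, ag.
  replace (S n - l)%nat with (S (n - l)) by lia. rewrite <- tech_pow_Rmult.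
  pose proof (INR_fact_neq_0 l). pose proof (INR_fact_neq_0 (S (n - l))). pose proof (INR_fact_neq_0 (S n)).
  field. auto.
Qed.

Lemma Rb1 : Rb 1 = -1.
Proof. unfold Rb. simpl sN. rewrite Bplus0. unfold Binomial.C. simpl. field. Qed.

Lemma sN_minus f g n : sN (fun k => f k - g k) n = sN f n - sN g n.
Proof. induction n; simpl; [lra|rewrite IHn; lra]. Qed.

Lemma binom_diff y q : y ^ q - (y - 1) ^ q = - sN (fun i => Binomial.C q i * y ^ i * (-1) ^ (q - i)) q.
Proof.
  replace (y - 1) with (y + -1) by ring. rewrite binomial, sfR0_sN.
  change (sN ?f (S q)) with (sN f q + f q). cbv beta. rewrite Cnn, Nat.sub_diag. simpl (_ ^ 0). ring.
Qed.

Definition Fpoly p y := sN (fun l => Binomial.C (S p) l * Bplus l * y ^ (S p - l)) (S p).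

Lemma Cswap n l i : (l + i <= n)%nat -> Binomial.C n l * Binomial.C (n - l) i = Binomial.C n i * Binomial.C (n - i) l.
Proof.
  intros H. unfold Binomial.C. replace (n - l - i)%nat with (n - i - l)%nat by lia.
  pose proof (INR_fact_neq_0 l). pose proof (INR_fact_neq_0 i). pose proof (INR_fact_neq_0 (n - l)).
  pose proof (INR_fact_neq_0 (n - i)). pose proof (INR_fact_neq_0 (n - i - l)). field. repeat split; auto.
Qed.

Lemma Fdiff p y : Fpoly p y - Fpoly p (y - 1) = INR (S p) * y ^ p.
Proof.
  unfold Fpoly. rewrite <- sN_minus.
  rewrite (sN_ext _ (fun l => - sN (fun i => Binomial.C (S p) l * Bplus l * (Binomial.C (S p - l) i * y ^ i * (-1) ^ (S p - l - i))) (S p - l))).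
  2: { intros l Hl. rewrite <- Rmult_minus_distr_l, binom_diff, sN_scal. ring. }
  rewrite (sN_ext _ (fun l => -1 * sN (fun i => Binomial.C (S p) l * Bplus l * (Binomial.C (S p - l) i * y ^ i * (-1) ^ (S p - l - i))) (S p - l))) by (intros; ring).
  rewrite sN_scal, tri_swap.
  rewrite (sN_ext _ (fun i => Binomial.C (S p) i * y ^ i * Rb (S p - i))).
  2: { intros i Hi. unfold Rb. rewrite <- sN_scal. apply sN_ext. intros l Hl.
       replace (S p - l - i)%nat with (S p - i - l)%nat by lia.
       transitivity ((Binomial.C (S p) l * Binomial.C (S p - l) i) * Bplus l * y ^ i * (-1) ^ (S p - i - l)). ring.
       rewrite Cswap by lia. ring. }
  change (sN ?f (S p)) with (sN f p + f p). cbv beta.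
  rewrite (sN_ext _ (fun _ => 0)). rewrite sN_zero. replace (S p - p)%nat with 1%nat by lia. rewrite Rb1.
  replace (Binomial.C (S p) p) with (INR (S p)). ring.
  unfold Binomial.C. replace (S p - p)%nat with 1%nat by lia. rewrite fact_simpl, mult_INR. simpl (fact 1). simpl (INR 1).
  pose proof (INR_fact_neq_0 p). field. auto.
  intros i Hi. rewrite Rb_ge2 by lia. ring.
Qed.

Lemma faulhaber p n : sN (fun k => INR (S k) ^ p) n = / INR (S p) * Fpoly p (INR n).
Proof.
  induction n.
  - simpl sN. unfold Fpoly. rewrite (sN_ext _ (fun _ => 0)). rewrite sN_zero. ring.
    intros. simpl INR. rewrite pow_i by lia. ring.
  - change (sN ?f (S n)) with (sN f n + f n). cbv beta. rewrite IHn.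
    pose proof (Fdiff p (INR (S n))). rewrite S_INR in H at 2. replace (INR n + 1 - 1) with (INR n) in H by ring.
    assert (INR (S p) <> 0) by (apply not_0_INR; lia).
    apply Rmult_eq_reg_l with (INR (S p)); auto. rewrite Rmult_plus_distr_l, <- !Rmult_assoc, Rinv_r, !Rmult_1_l by auto.
    lra.
Qed.

Lemma H_neg p n : H (- Z.of_nat p) n = sN (fun k => INR (S k) ^ p) n.
Proof.
  unfold H. replace (0 <? - Z.of_nat p)%Z with false by (symmetry; apply Z.ltb_ge; lia).
  rewrite Z.opp_involutive, Nat2Z.id, sumR_sN. replace (n + 1 - 1)%nat with n by lia. reflexivity.
Qed.

Lemma part2 : forall m r p : nat, (1 <= m)%nat -> (1 <= r)%nat -> (p + 2 <= m)%nat ->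
    is_series (S_term (- Z.of_nat p) m 1 r)
      (/ INR (p + 1) * sumR 0 p (fun l =>
          Binomial.C (p + 1) l * Bplus l *
          (sumR 2 (m - p - 1 + l) (fun i =>
              (-1) ^ (m - p - 1 + l - i) / INR r ^ (m - p + l - i) * zeta i)
           + (-1) ^ (m - p - 2 + l) / INR r ^ (m - p - 1 + l) * H 1 r))).
Proof.
  intros m r p Hm Hr Hpm.
  apply is_series_ext with (fun n => / INR (S p) * sN (fun l => Binomial.C (S p) l * Bplus l * Tterm (m - p - 1 + l) r n) (S p)).
  - intros n. unfold S_term. rewrite H_neg, faulhaber. unfold Fpoly. rewrite pow_1.
    unfold Rdiv. rewrite Rmult_assoc. f_equal. rewrite Rmult_comm, <- sN_scal. apply sN_ext. intros l Hl.
    unfold Tterm. rewrite plus_INR. pose proof (INRS_pos n). pose proof (pos_INR r).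
    replace (INR (S n) ^ m) with (INR (S n) ^ (m-p-1+l) * INR (S n) ^ (S p - l)) by (rewrite <- pow_add; f_equal; lia).
    assert (INR (S n) ^ (m - p - 1 + l) <> 0) by (apply pow_nonzero; lra).
    assert (INR (S n) ^ (S p - l) <> 0) by (apply pow_nonzero; lra).
    toR. field. repeat split; auto; lra.
  - replace (p + 1)%nat with (S p) by lia. rewrite sumR_sN. replace (p + 1 - 0)%nat with (S p) by lia.
    apply is_series_scalR. apply is_series_fin. intros l Hl.
    apply is_series_ext with (fun n => Binomial.C (S p) l * Bplus l * Tterm (m - p - 1 + l) r n). reflexivity.
    apply is_series_scalR.
    replace (sumR 2 (m - p - 1 + (0 + l)) (fun i => (-1) ^ (m - p - 1 + (0 + l) - i) / INR r ^ (m - p + (0 + l) - i) * zeta i) +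
             (-1) ^ (m - p - 2 + (0 + l)) / INR r ^ (m - p - 1 + (0 + l)) * H 1 r)
      with (Vf zeta (hp 1 r) (INR r) (m - p - 1 + l)).
    apply Tser; auto; lia.
    unfold Vf. simpl (0 + l)%nat. f_equal.
    + apply sumR_ext. intros i Hi. do 3 f_equal. lia.
    + rewrite (H_pos 1 r ltac:(lia) : H 1 r = hp 1 r). do 3 f_equal. lia.
Qed.

Theorem lemma2 :
  (forall p m r : nat, (1 <= p)%nat -> (1 <= m)%nat -> (1 <= r)%nat ->
    is_series (S_term (Z.of_nat p) m 1 r)
      (sumR 2 m (fun i => (-1) ^ (m - i) / INR r ^ (m - i + 1) * Spp (Z.of_nat p) i)
       + (-1) ^ (m - 1) / INR r ^ m * zeta (p + 1)
       + (-1) ^ (m - 1) / INR r ^ m *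
           (sumR 1 (r - 1) (fun j => (-1) ^ (p + 1) * H 1 j / INR j ^ p)
            + sumR 2 p (fun l => (-1) ^ (p - l) * H (Z.of_nat (p - l + 1)) (r - 1) * zeta l))))
  /\
  (forall m r p : nat, (1 <= m)%nat -> (1 <= r)%nat -> (p + 2 <= m)%nat ->
    is_series (S_term (- Z.of_nat p) m 1 r)
      (/ INR (p + 1) * sumR 0 p (fun l =>
          Binomial.C (p + 1) l * Bplus l *
          (sumR 2 (m - p - 1 + l) (fun i =>
              (-1) ^ (m - p - 1 + l - i) / INR r ^ (m - p + l - i) * zeta i)
           + (-1) ^ (m - p - 2 + l) / INR r ^ (m - p - 1 + l) * H 1 r)))).
Proof. split. exact part1. exact part2. Qed.
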